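(* Let $S=(G,P,\Lambda,I)$ be a completely simple semigroup with non-singular sandwich matrix $P$. If the set $M=\{(x,y)\in S^2\mid x=(1,1_G,1)\text{ or }y=(1,1_G,1)\}$ is algebraic over $S$ in the language $\mathcal{L}_S$, then $S$ is an equational domain in the language $\mathcal{L}_S$.
   Context: Rees representation: a completely simple semigroup $S=(G,P,\Lambda,I)$ is given by a group $G$, index sets $\Lambda,I$ (each containing an element $1$), and a matrix $P=(p_{i\lambda})_{i\in I,\lambda\in\Lambda}$ over $G$ normalised so that $p_{1\lambda}=p_{i1}=1_G$; elements are triples $(\lambda,g,i)$ with product $(\lambda,g,i)(\mu,h,j)=(\lambda,gp_{i\mu}h,j)$ and inversion $(\lambda,g,i)^{-1}=(\lambda,p_{i\lambda}^{-1}g^{-1}p_{i\lambda}^{-1},i)$. $P$ is non-singular if it has no two equal rows and no two equal columns. The language $\mathcal{L}_S$ is $\{\cdot,{}^{-1}\}$ plus a constant for each element of $S$. An equation is an equality of two $\mathcal{L}_S$-terms; a system is a set of equations; a subset of $S^n$ is algebraic if it is the solution set of some system; $S$ is an equational domain (e.d.) if every finite union of algebraic sets is algebraic. *)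

(* Defs.v *)
From mathcomp Require Import all_boot.
Set Implicit Arguments.
Unset Strict Implicit.
Unset Printing Implicit Defensive.

(** G is an arbitrary (possibly infinite) group given by its operations and
    axioms; Lambda and I are index types with distinguished element 1;
    P = (p_{i,lambda}) is normalised: p_{1,lambda} = p_{i,1} = 1_G. *)
Record ReesData := {
  grp : Type;
  gmul : grp -> grp -> grp;
  ginv : grp -> grp;
  gone : grp;
  gmulA : forall a b c, gmul a (gmul b c) = gmul (gmul a b) c;
  gmul1g : forall a, gmul gone a = a;
  gmulg1 : forall a, gmul a gone = a;
  gmulVg : forall a, gmul (ginv a) a = gone;
  gmulgV : forall a, gmul a (ginv a) = gone;
  Lam : Type;
  Idx : Type;
  lam1 : Lam;
  idx1 : Idx;
  sandwich : Idx -> Lam -> grp;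
  sandwich_row1 : forall l, sandwich idx1 l = gone;
  sandwich_col1 : forall i, sandwich i lam1 = gone
}.

Definition elt (R : ReesData) : Type := (Lam R * grp R * Idx R)%type.

Definition smul (R : ReesData) (x y : elt R) : elt R :=
  match x, y with
  | (l, g, i), (m, h, j) => (l, gmul g (gmul (sandwich i m) h), j)
  end.

Definition sinv (R : ReesData) (x : elt R) : elt R :=
  match x with
  | (l, g, i) =>
      (l, gmul (ginv (sandwich i l))
                 (gmul (ginv g) (ginv (sandwich i l))), i)
  end.

Definition sunit (R : ReesData) : elt R := (@lam1 R, @gone R, @idx1 R).

Definition nonsingular (R : ReesData) : Prop :=
  (forall i i' : Idx R, (forall l, sandwich i l = sandwich i' l) -> i = i') /\
  (forall l l' : Lam R, (forall i, sandwich i l = sandwich i l') -> l = l').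

Inductive term (S : Type) (n : nat) : Type :=
  | tVar : 'I_n -> term S n
  | tConst : S -> term S n
  | tMul : term S n -> term S n -> term S n
  | tInv : term S n -> term S n.

Fixpoint teval (R : ReesData) (n : nat) (x : 'I_n -> elt R) (t : term (elt R) n)
  : elt R :=
  match t with
  | tVar i => x i
  | tConst s => s
  | tMul t1 t2 => smul (teval x t1) (teval x t2)
  | tInv t1 => sinv (teval x t1)
  end.

Definition equation (R : ReesData) (n : nat) : Type :=
  (term (elt R) n * term (elt R) n)%type.

Definition system (R : ReesData) (n : nat) : Type := equation R n -> Prop.

Definition solutions (R : ReesData) (n : nat) (Ss : system R n)
  : ('I_n -> elt R) -> Prop :=
  fun x => forall e, Ss e -> teval x e.1 = teval x e.2.

Definition algebraic (R : ReesData) (n : nat) (Y : ('I_n -> elt R) -> Prop)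
  : Prop :=
  exists Ss : system R n, forall x, Y x <-> solutions Ss x.

Definition equational_domain (R : ReesData) : Prop :=
  forall (n k : nat) (Y : 'I_k.+1 -> ('I_n -> elt R) -> Prop),
    (forall j, algebraic (Y j)) ->
    algebraic (fun x => exists j, Y j x).

Definition Mset (R : ReesData) : ('I_2 -> elt R) -> Prop :=
  fun p => p ord0 = sunit R \/ p (@Ordinal 2 1 isT) = sunit R.

(* Main.v *)
Require Import Defs.
From mathcomp Require Import all_boot.
From Stdlib Require Import Classical.

Section Grp.
Variable R : ReesData.
Local Notation "a * b" := (gmul a b).

Lemma ginv1 : ginv (gone R) = gone R.
Proof. by rewrite -[ginv _]gmulg1 gmulVg. Qed.

Lemma cancel_l (a b c : grp R) : a * b = a * c -> b = c.
Proof.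
move=> H. by rewrite -[b]gmul1g -[c]gmul1g -(gmulVg a) -!gmulA H.
Qed.

Lemma cancel_r (a b c : grp R) : b * a = c * a -> b = c.
Proof.
move=> H. by rewrite -[b]gmulg1 -[c]gmulg1 -(gmulgV a) !gmulA H.
Qed.

Lemma div1 (a b : grp R) : b * ginv a = gone R -> b = a.
Proof.
move=> H. by rewrite -[b]gmulg1 -(gmulVg a) gmulA H gmul1g.
Qed.

Definition wconst1 (k : Idx R) : elt R := (lam1 R, gone R, k).
Definition wconst2 (r : Lam R) : elt R := (r, gone R, idx1 R).

Definition wf k r (u : elt R) := smul (smul (wconst1 k) u) (wconst2 r).
Definition fF k r (u v : elt R) := smul (wf k r u) (sinv (wf k r v)).

Definition aa k r (u : elt R) : grp R :=
  let: (l, g, i) := u in (sandwich k l * g) * sandwich i r.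

Lemma wf_E k r u : wf k r u = (lam1 R, aa k r u, idx1 R).
Proof.
case: u => [[l g] i] /=. by rewrite /wf /= gmul1g gmulg1.
Qed.

Lemma fF_E k r u v : fF k r u v = sunit R <-> aa k r u = aa k r v.
Proof.
rewrite /fF !wf_E /= sandwich_row1 ginv1 !gmul1g gmulg1 /sunit.
split.
- by move=> [] /div1.
- by move=> ->; rewrite gmulgV.
Qed.

Lemma key (NS : nonsingular R) (u v : elt R) :
  u = v <-> forall k r, fF k r u v = sunit R.
Proof.
split; first by move=> -> k r; apply/fF_E.
move=> H.
have H' : forall k r, aa k r u = aa k r v by move=> k r; apply/fF_E.
clear H; case: u H' => [[l g] i]; case: v => [[l' g'] i'] /= H'.
have Hg : g = g'.
  by move: (H' (idx1 R) (lam1 R)); rewrite !sandwich_row1 !sandwich_col1 !gmul1g !gmulg1.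
subst g'.
have Hl : l = l'.
  apply: (proj2 NS) => k. move: (H' k (lam1 R)); rewrite !sandwich_col1 !gmulg1.
  exact: cancel_r.
have Hi : i = i'.
  apply: (proj1 NS) => r. move: (H' (idx1 R) r); rewrite !sandwich_row1 !gmul1g.
  exact: cancel_l.
by rewrite Hl Hi.
Qed.

End Grp.
Arguments fF {R}.
Arguments key {R}.
Arguments wconst1 {R}.
Arguments wconst2 {R}.

Fixpoint subst (S : Type) (m n : nat) (s : 'I_m -> term S n) (t : term S m)
  : term S n :=
  match t with
  | tVar i => s i
  | tConst c => tConst n c
  | tMul t1 t2 => tMul (subst _ _ _ s t1) (subst _ _ _ s t2)
  | tInv t1 => tInv (subst _ _ _ s t1)
  end.
Arguments subst {S m n} s t.

Lemma teval_subst (R : ReesData) m n (s : 'I_m -> term (elt R) n) x t :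
  teval x (subst s t) = teval (fun i => teval x (s i)) t.
Proof. by elim: t => //= [t1 -> t2 ->|t1 ->]. Qed.

Definition Fterm (R : ReesData) n k r (t s : term (elt R) n) : term (elt R) n :=
  let W t := tMul (tMul (tConst n (wconst1 k)) t) (tConst n (wconst2 r)) in
  tMul (W t) (tInv (W s)).
Arguments Fterm {R n}.

Lemma Fterm_E (R : ReesData) n k r t s (x : 'I_n -> elt R) :
  teval x (Fterm k r t s) = fF k r (teval x t) (teval x s).
Proof. by []. Qed.

Lemma algebraic_ext (R : ReesData) n (Y Y' : ('I_n -> elt R) -> Prop) :
  algebraic Y -> (forall x, Y x <-> Y' x) -> algebraic Y'.
Proof.
move=> [Ss HS] H; exists Ss => x; rewrite -HS; by split; move/H.
Qed.

Lemma union2 (R : ReesData) n (Y1 Y2 : ('I_n -> elt R) -> Prop) :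
  nonsingular R -> algebraic (@Mset R) -> algebraic Y1 -> algebraic Y2 ->
  algebraic (fun x => Y1 x \/ Y2 x).
Proof.
move=> NS [SM HM] [S1 H1] [S2 H2].
pose sig (A B : term (elt R) n) := fun i : 'I_2 => if val i == 0 then A else B.
exists (fun e => exists E e1 e2 k1 r1 k2 r2, SM E /\ S1 e1 /\ S2 e2 /\
  e = (subst (sig (Fterm k1 r1 e1.1 e1.2) (Fterm k2 r2 e2.1 e2.2)) E.1,
       subst (sig (Fterm k1 r1 e1.1 e1.2) (Fterm k2 r2 e2.1 e2.2)) E.2)) => x.
split.
- move=> Hx e [E [e1 [e2 [k1 [r1 [k2 [r2 [HE [He1 [He2 ->]]]]]]]]]] /=.
  rewrite !teval_subst.
  apply: (proj1 (HM _)) => //.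
  rewrite /Mset.
  case: Hx => [/H1 Hx|/H2 Hx].
  + left. change (teval x (Fterm k1 r1 e1.1 e1.2) = sunit R).
    rewrite Fterm_E. exact: (proj1 (key NS _ _) (Hx _ He1)).
  + right. change (teval x (Fterm k2 r2 e2.1 e2.2) = sunit R).
    rewrite Fterm_E. exact: (proj1 (key NS _ _) (Hx _ He2)).
- move=> Hs.
  case: (classic (Y1 x)) => [|N1]; first by left.
  right; apply/H2 => e2 He2.
  have [e1 [He1 Ne1]] : exists e1, S1 e1 /\ teval x e1.1 <> teval x e1.2.
    apply: NNPP => C; apply: N1; apply/H1 => e1 He1.
    apply: NNPP => C'; apply: C; by exists e1.
  have [k1 [r1 Nk]] : exists k1 r1,
      fF k1 r1 (teval x e1.1) (teval x e1.2) <> sunit R.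
    apply: NNPP => C; apply: Ne1; apply/(key NS) => k r.
    apply: NNPP => C'; apply: C; by exists k, r.
  apply/(key NS) => k2 r2.
  have HMx : Mset (fun i => teval x (sig (Fterm k1 r1 e1.1 e1.2)
                                          (Fterm k2 r2 e2.1 e2.2) i)).
    apply/HM => E HE.
    rewrite -!teval_subst.
    apply: (Hs (_, _)).
    by exists E, e1, e2, k1, r1, k2, r2.
  move: HMx; rewrite /Mset; case.
  + move=> H; exfalso; apply: Nk; exact H.
  + move=> H; exact H.
Qed.

Arguments union2 {R n Y1 Y2}.
Arguments algebraic_ext {R n Y Y'}.

Theorem mainTheorem5 (R : ReesData) :
  nonsingular R -> algebraic (@Mset R) -> equational_domain R.
Proof.
move=> NS HM n k; elim: k => [|k IH] Y HY.
- apply: (algebraic_ext (HY ord0)) => x; split; first by exists ord0.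
  case=> j Hj; suff -> : ord0 = j by []. by apply: val_inj; case: j {Hj} => [[]].
- have H1 := IH (fun j => Y (lift ord0 j)) (fun j => HY _).
  apply: (algebraic_ext (union2 NS HM (HY ord0) H1)) => x; split.
  + case=> [H|[j Hj]]; first by exists ord0. by exists (lift ord0 j).
  + case=> j Hj. case: j Hj => [[|j'] Hj'] Hj.
    * left. by rewrite (_ : ord0 = Ordinal Hj'); last exact: val_inj.
    * right. exists (Ordinal (Hj' : j' < k.+1)).
      by rewrite (_ : lift ord0 _ = Ordinal Hj'); last exact: val_inj.
Qed.
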